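(* Let $K$ be a field with $\operatorname{char}(K)=0$ and let $f\in K[x]$ have at least two distinct critical points and equal critical values at at most two distinct critical points. Suppose $f(x)=g(h(x))$ with $g,h\in K[x]$ and $t=\deg g>1$, and put $k=\deg h$. Then either $k\leq 2$, or \[ f'(x)=a'(x-x_0)^{k_0t-1}(x-x_1)^{k_1t-1}(kx-k_0x_1-k_1x_0) \] for some $a'\in K$, integers $k_0,k_1\geq 1$ with $k_0+k_1=k\geq 3$ and distinct $x_0,x_1\in\overline{K}$, or \[ f'(x)=a'(x-x_0)^{2t_0+1}(x-x_1)^{t_0}(x-y_0)^{2t_1+1}(x-y_1)^{t_1} \] with $a'\in K$, $\deg h=3$, integers $t_0,t_1\geq 1$ with $t_0+t_1=t-1$, and distinct $x_0,x_1,y_0,y_1\in\overline{K}$ satisfying $3x_0-y_0=2y_1$ and $3y_0-x_0=2x_1$.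
   Context: Critical points of $f$ are the roots of $f'$ in an algebraic closure $\overline{K}$, and critical values are values of $f$ at critical points. ''$f$ has equal critical values at at most two distinct critical points'' means there do not exist three pairwise distinct critical points $\beta_1,\beta_2,\beta_3$ of $f$ with $f(\beta_1)=f(\beta_2)=f(\beta_3)$. *)

(* Defs.v *)
From HB Require Import structures.
From mathcomp Require Import all_boot all_order all_algebra.
Set Implicit Arguments. Unset Strict Implicit. Unset Printing Implicit Defensive.
Import Order.TTheory GRing.Theory Num.Theory.
Local Open Scope ring_scope.

Definition critical (K : fieldType) (L : closedFieldType)
  (iota : {rmorphism K -> L}) (f : {poly K}) (b : L) : bool :=
  root (map_poly iota f^`()) b.

(* Main.v *)
Require Import Defs.
From HB Require Import structures.
From mathcomp Require Import all_boot all_order all_algebra.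
From mathcomp Require Import ring zify.

Import Order.TTheory GRing.Theory Num.Theory.
Local Open Scope ring_scope.

Lemma prod1 (R : idomainType) (x0 : R) (rs : seq R) :
  all (pred1 x0) rs -> \prod_(z <- rs) ('X - z%:P) = ('X - x0%:P) ^+ size rs.
Proof.
elim: rs => [|z rs IH] /=; first by rewrite big_nil expr0.
by case/andP => /eqP -> /IH Hr; rewrite big_cons Hr exprS.
Qed.

Lemma prod2 (R : idomainType) (x0 x1 : R) (rs : seq R) :
  x0 != x1 -> all (fun z => (z == x0) || (z == x1)) rs ->
  \prod_(z <- rs) ('X - z%:P) = ('X - x0%:P) ^+ count_mem x0 rs * ('X - x1%:P) ^+ count_mem x1 rs
  /\ (count_mem x0 rs + count_mem x1 rs = size rs)%N.
Proof.
move=> nx; elim: rs => [|z rs IH] /=; first by rewrite big_nil !expr0 mulr1.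
case/andP => Hz /IH [Hr Hs]; rewrite big_cons Hr.
case/orP: Hz => /eqP ->.
  rewrite eqxx (negbTE (nx)) /= add0n exprS mulrA; split => //; by rewrite -addnA Hs.
rewrite eqxx eq_sym (negbTE (nx)) /= add0n exprS; split; [by rewrite mulrCA | by rewrite addnCA Hs].
Qed.

Lemma dfac (R : idomainType) (x0 x1 : R) (n0 n1 : nat) :
  (0 < n0)%N -> (0 < n1)%N ->
  (('X - x0%:P) ^+ n0 * ('X - x1%:P) ^+ n1)^`() =
  ('X - x0%:P) ^+ (n0 - 1) * ('X - x1%:P) ^+ (n1 - 1) *
  ((n0 + n1)%:R *: 'X - (n0%:R * x1 + n1%:R * x0)%:P).
Proof.
Proof.
case: n0 => // m0 _; case: n1 => // m1 _.
rewrite derivM !deriv_exp !derivXsubC !mul1r !succnK.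
have -> : (m0.+1 - 1 = m0)%N by rewrite subn1.
have -> : (m1.+1 - 1 = m1)%N by rewrite subn1.
rewrite -mul_polyC polyCD !polyCM.
rewrite (polyC_natr _ (m0.+1 + m1.+1)) (polyC_natr _ m0.+1) (polyC_natr _ m1.+1).
rewrite (natrD _ m0.+1 m1.+1).
rewrite -(mulr_natr (('X - x0%:P) ^+ m0)) -(mulr_natr (('X - x1%:P) ^+ m1)).
move: ('X : {poly R}) (x0%:P) (x1%:P) => X a b.

rewrite !exprS.
ring.
Qed.

Lemma root_subC (R : idomainType) (H : {poly R}) b z : root (H - b%:P) z = (H.[z] == b).
Proof. by rewrite rootE hornerD hornerN hornerC subr_eq0. Qed.

Lemma fac (L : closedFieldType) (H : {poly L}) (b : L) :
  (1 < size H)%N ->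
  (forall a1 a2 a3, H.[a1] = b -> H.[a2] = b -> H.[a3] = b ->
      ~~ [&& a1 != a2, a1 != a3 & a2 != a3]) ->
  exists x0 x1 n0 n1, [/\ (n0 + n1 = (size H).-1)%N,
     H - b%:P = lead_coef H *: (('X - x0%:P) ^+ n0 * ('X - x1%:P) ^+ n1),
     H.[x0] = b, H.[x1] = b &
     ((x0 = x1 /\ n1 = 0%N) \/ [/\ x0 != x1, (0 < n0)%N & (0 < n1)%N])].
Proof.
move=> sH Hs.
have [rs Hrs] := closed_field_poly_normal (H - b%:P).
have sC : (size (- b%:P) < size H)%N.
  by rewrite size_polyN size_polyC; case: (b != 0) sH => //= /ltnW.
have lcE : lead_coef (H - b%:P) = lead_coef H by rewrite lead_coefDl.
have H0 : H != 0 by rewrite -size_poly_eq0; case: (size H) sH.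
have lc0 : lead_coef H != 0 by rewrite lead_coef_eq0.
rewrite lcE in Hrs.
have szr : size rs = (size H).-1.
  move: (congr1 (fun p : {poly L} => size p) Hrs) => /=; rewrite size_scale // size_prod_XsubC size_polyDl //.
  by move=> ->.
have rootr : forall z, z \in rs -> H.[z] = b.
  move=> z zr; apply/eqP; rewrite -root_subC Hrs rootZ //; by rewrite root_prod_XsubC.
case: rs Hrs szr rootr => [|x0 rs'] Hrs szr rootr; first by have := prednK (ltnW sH); rewrite -szr => E; rewrite -E in sH.
set rs := x0 :: rs' in Hrs szr rootr.
have x0r : x0 \in rs by rewrite inE eqxx.
have [Hall|] := boolP (all (pred1 x0) rs).
  exists x0, x0, (size rs), 0%N; split => //; first by rewrite addn0.
    by rewrite Hrs (@prod1 _ _ _ Hall) expr0 mulr1.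
  1,2: by apply: rootr.
  by left.
case/allPn => x1 x1r /= nx10.
have nx01 : x0 != x1 by rewrite eq_sym.
have Hall : all (fun z => (z == x0) || (z == x1)) rs.
  apply/allP => z zr; apply/negPn/negP; rewrite negb_or => /andP [n0 n1].
  by have := Hs z x0 x1 (rootr z zr) (rootr x0 x0r) (rootr x1 x1r); rewrite n0 n1 nx01.
have [Hp Hc] := @prod2 _ _ _ _ nx01 Hall.
exists x0, x1, (count_mem x0 rs), (count_mem x1 rs); split.
- by rewrite Hc.
- by rewrite Hrs Hp.
- by apply: rootr.
- by apply: rootr.
right; split => //; rewrite lt0n; apply/eqP => /count_memPn; by rewrite ?x0r ?x1r.
Qed.

Lemma comp_polyXn (R : comNzRingType) (p q : {poly R}) n : (p ^+ n) \Po q = (p \Po q) ^+ n.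
Proof.
elim: n => [|n IH]; first by rewrite !expr0 comp_polyC.
by rewrite !exprS comp_polyM IH.
Qed.

Lemma coprime_noroot (L : closedFieldType) (p q : {poly L}) :
  p != 0 -> (forall z, root p z -> ~~ root q z) -> coprimep p q.
Proof.
move=> p0 Hpq; rewrite coprimep_def; apply/negPn/negP => /closed_rootP [z Hz].
have Hp := root_dvdp (dvdp_gcdl p q) Hz.
have Hq := root_dvdp (dvdp_gcdr p q) Hz.
by move: (Hpq z Hp); rewrite Hq.
Qed.

Lemma XsubCn_neq0 (R : idomainType) (x : R) n : ('X - x%:P) ^+ n != 0.
Proof. by rewrite expf_neq0 // polyXsubC_eq0. Qed.

Lemma Ediv (L : closedFieldType) (H : {poly L}) (b x0 x1 : L) (n0 n1 : nat) :
  H - b%:P = lead_coef H *: (('X - x0%:P) ^+ n0 * ('X - x1%:P) ^+ n1) ->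
  lead_coef H != 0 -> H.[x0] = b -> H.[x1] = b ->
  ((x0 = x1 /\ n1 = 0%N) \/ [/\ x0 != x1, (0 < n0)%N & (0 < n1)%N]) ->
  exists E : {poly L}, [/\ E %| H^`(), E != 0, size E = ((n0 - 1) + (n1 - 1)).+1
      & forall y, root E y -> H.[y] = b].
Proof.
move=> HQ lc0 Hx0 Hx1 Hcase.
exists (('X - x0%:P) ^+ (n0 - 1) * ('X - x1%:P) ^+ (n1 - 1)); split.
- have -> : H^`() = (H - b%:P)^`() by rewrite derivB derivC subr0.
  rewrite HQ derivZ dvdpZr //.
  case: Hcase => [[<- ->]|[nx n0p n1p]].
    rewrite !expr0 !mulr1 deriv_exp derivXsubC mul1r subn1 -mulr_natr.
    by apply: dvdp_mulr; apply: dvdpp.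
  by rewrite dfac //; apply: dvdp_mulIl.
- by rewrite mulf_neq0 // XsubCn_neq0.
- by rewrite size_mul ?XsubCn_neq0 // !size_exp_XsubC addSn addnS.
- move=> y; rewrite rootE hornerM !horner_exp !hornerXsubC mulf_eq0 !expf_eq0 !subr_eq0.
  by case/orP => /andP [_ /eqP ->].
Qed.

Lemma sderiv (R : idomainType) (hc : forall n, (0 < n)%N -> n%:R != 0 :> R) (p : {poly R}) :
  size p^`() = (size p).-1.
Proof.
have [->|p0] := eqVneq p 0; first by rewrite deriv0 size_poly0.
have lc0 : lead_coef p != 0 by rewrite lead_coef_eq0.
have Hlt := lt_size_deriv p0.
move: lc0 Hlt; rewrite lead_coefE.
have : (0 < size p)%N by rewrite size_poly_gt0.
case: (size p) => [|[|m]] //= _ lc0.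
  by rewrite ltnS leqn0 => /eqP ->.
rewrite ltnS => Hlt.
apply/eqP; rewrite eqn_leq Hlt /=.
rewrite ltnNge; apply/negP => Hle.
have := nth_default 0 Hle; rewrite coef_deriv -mulr_natr => /eqP.
by rewrite mulf_eq0 (negbTE lc0) (negbTE (hc _ _)).
Qed.

Lemma bound2 (L : closedFieldType) (P E1 E2 : {poly L}) :
  P != 0 -> E1 %| P -> E2 %| P -> E1 != 0 -> E2 != 0 ->
  (forall z, root E1 z -> ~~ root E2 z) -> (size E1 + size E2 <= size P + 1)%N.
Proof.
move=> P0 d1 d2 n1 n2 Hr.
have cop := @coprime_noroot _ _ _ n1 Hr.
have : E1 * E2 %| P by rewrite Gauss_dvdp // d1 d2.
move/(dvdp_leq P0); rewrite size_mul //.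
have : (0 < size E1)%N by rewrite size_poly_gt0.
case: (size E1) => // s1 _; rewrite addSn /= addn1 ltnS.
by [].
Qed.

Lemma fac3 (L : closedFieldType) (H : {poly L}) (b x0 x1 : L) (n0 n1 : nat) :
  H - b%:P = lead_coef H *: (('X - x0%:P) ^+ n0 * ('X - x1%:P) ^+ n1) ->
  H.[x0] = b -> H.[x1] = b -> (n0 + n1 = 3)%N -> x0 != x1 -> (0 < n0)%N -> (0 < n1)%N ->
  exists u v, [/\ u != v, H.[u] = b, H.[v] = b &
     H - b%:P = lead_coef H *: (('X - u%:P) ^+ 2 * ('X - v%:P) ^+ 1)].
Proof.
move=> HQ h0 h1 s nx p0 p1.
have [e|e] : (n0 = 2 /\ n1 = 1 \/ n0 = 1 /\ n1 = 2)%N by lia.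
  by case: e => e0 e1; exists x0, x1; rewrite -e0 -e1.
case: e => e0 e1; exists x1, x0; split => //; first by rewrite eq_sym.
by rewrite HQ e0 e1 mulrC.
Qed.

Lemma lbE (n0 n1 : nat) : ((n1 = 0)%N \/ (0 < n0 /\ 0 < n1)%N) ->
  (n0 + n1 <= ((n0 - 1) + (n1 - 1)).+1 + 1)%N.
Proof. lia. Qed.

Lemma k3lem (k s0 s1 : nat) : (k <= s0 + 1)%N -> (k <= s1 + 1)%N -> (s0 + s1 <= k + 1)%N ->
  (2 < k)%N -> k = 3%N.
Proof. lia. Qed.

Lemma evalM (R : comNzRingType) (c u v w : R) :
  (c *: (('X - u%:P) ^+ 1 * ('X - v%:P) ^+ 0 * ((2 + 1)%:R *: 'X - (2%:R * v + 1%:R * u)%:P))).[w]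
  = c * ((w - u) * ((2 + 1)%:R * w - (2%:R * v + 1%:R * u))).
Proof.
rewrite hornerZ !hornerM !horner_exp hornerXsubC expr0 expr1 mulr1.
by rewrite hornerD hornerN hornerZ hornerX hornerC.
Qed.

Lemma rel3 (F : fieldType) (c u v w : F) : c != 0 -> w != u ->
  c * ((w - u) * ((2 + 1)%:R * w - (2%:R * v + 1%:R * u))) = 0 -> 3 * w - u = 2 * v.
Proof.
move=> c0 nwu /eqP; rewrite !mulf_eq0 (negbTE c0) subr_eq0 (negbTE nwu) /= => /eqP e.
have : 3 * w - u - 2 * v = (2 + 1)%:R * w - (2%:R * v + 1%:R * u) by ring.
by rewrite e => /eqP; rewrite subr_eq0 => /eqP.
Qed.

Lemma M0e (F : fieldType) (u v w : F) : 3 * w - u = 2 * v ->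
  (2 + 1)%:R *: 'X - (2%:R * v + 1%:R * u)%:P = 3 *: ('X - w%:P).
Proof.
move=> e; have -> : 2%:R * v + 1%:R * u = 3 * w by rewrite -e; ring.
by rewrite scalerBr scale_polyC.
Qed.

Lemma nsingle (s0 s1 : nat) : s0 = (3 - 1 + (0 - 1)).+1 -> (3 <= s1 + 1)%N -> (s0 + s1 <= 3 + 1)%N -> False.
Proof. lia. Qed.

Lemma nthree (s0 s1 s2 : nat) : (3 <= s0 + 1)%N -> (3 <= s1 + 1)%N -> (3 <= s2 + 1)%N ->
  ((s0 + s1).-1 + s2 <= 3 + 1)%N -> False.
Proof. case: s0 => [|s0]; case: s1 => [|s1] //=; lia. Qed.

Lemma core (L : closedFieldType) (hc : forall n, (0 < n)%N -> n%:R != 0 :> L)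
  (G H : {poly L}) (t k : nat)
  (sG : size G = t.+1) (sH : size H = k.+1) (ht : (1 < t)%N) (hk : (2 < k)%N)
  (h2 : exists b1 b2 : L, [/\ b1 != b2, root (G \Po H)^`() b1 & root (G \Po H)^`() b2])
  (hn3 : ~ exists b1 b2 b3 : L,
      [/\ [&& b1 != b2, b1 != b3 & b2 != b3],
          [&& root (G \Po H)^`() b1, root (G \Po H)^`() b2 & root (G \Po H)^`() b3],
          (G \Po H).[b1] = (G \Po H).[b2] &
          (G \Po H).[b1] = (G \Po H).[b3]]) :
  (exists (k0 k1 : nat) (x0 x1 : L),
        [/\ [/\ (1 <= k0)%N, (1 <= k1)%N, (k0 + k1)%N = k & (3 <= k)%N], x0 != x1 &
            (G \Po H)^`() =
              (lead_coef G^`() * lead_coef H ^+ t) *: (('X - x0%:P) ^+ (k0 * t - 1) * ('X - x1%:P) ^+ (k1 * t - 1)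
                          * (k%:R *: 'X - (k0%:R * x1 + k1%:R * x0)%:P))])
  \/ (exists (t0 t1 : nat) (x0 x1 y0 y1 : L),
        [/\ [/\ k = 3%N, (1 <= t0)%N, (1 <= t1)%N & (t0 + t1)%N = (t - 1)%N],
            uniq [:: x0; x1; y0; y1],
            3 * x0 - y0 = 2 * y1 /\ 3 * y0 - x0 = 2 * x1 &
            (G \Po H)^`() =
              (3 * lead_coef G^`() * lead_coef H ^+ t) *: (('X - x0%:P) ^+ (2 * t0 + 1) * ('X - x1%:P) ^+ t0
                          * ('X - y0%:P) ^+ (2 * t1 + 1) * ('X - y1%:P) ^+ t1)]).
Proof.
set Gd := G^`().
have sGd : size Gd = t by rewrite /Gd sderiv // sG.
have Gd0 : Gd != 0 by rewrite -size_poly_eq0 sGd; case: (t) ht.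
set a := lead_coef Gd.
have a0 : a != 0 by rewrite lead_coef_eq0.
set c := lead_coef H.
have H0 : H != 0 by rewrite -size_poly_eq0 sH.
have c0 : c != 0 by rewrite lead_coef_eq0.
have sHd : size H^`() = k by rewrite sderiv // sH.
have Hd0 : H^`() != 0 by rewrite -size_poly_eq0 sHd; case: (k) hk.
have sH1 : (1 < size H)%N by rewrite sH; case: (k) hk => [|[]].
have Fd : (G \Po H)^`() = (Gd \Po H) * H^`() by rewrite deriv_comp.
have hS : forall b, root Gd b -> forall a1 a2 a3, H.[a1] = b -> H.[a2] = b -> H.[a3] = b ->
      ~~ [&& a1 != a2, a1 != a3 & a2 != a3].
  move=> b rb a1 a2 a3 e1 e2 e3; apply/negP => dis; apply: hn3.
  have cr : forall y, H.[y] = b -> root (G \Po H)^`() y.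
    by move=> y ey; rewrite Fd rootE hornerM horner_comp ey (rootP rb) mul0r.
  exists a1, a2, a3; split => //; first by rewrite !cr.
    by rewrite !horner_comp e1 e2.
  by rewrite !horner_comp e1 e3.
have [rs Hrs] := closed_field_poly_normal Gd.
rewrite -/a in Hrs.
have szr : size rs = t.-1.
  by move: (congr1 (fun p : {poly L} => size p) Hrs) => /=; rewrite size_scale // size_prod_XsubC sGd => ->.
have rootr : forall z, z \in rs -> root Gd z.
  by move=> z zr; rewrite Hrs rootZ // root_prod_XsubC.
case: rs Hrs szr rootr => [|b0 rs'] Hrs szr rootr; first by move: szr ht => /=; case: (t) => [|[|n]].
set rs := b0 :: rs' in Hrs szr rootr.
have b0r : b0 \in rs by rewrite inE eqxx.
have [x0 [x1 [n0 [n1 [Hs0 HQ0 Hx0 Hx1 Hc0]]]]] := @fac _ _ _ sH1 (hS b0 (rootr b0 b0r)).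
have [E0 [E0d E00 sE0 rE0]] := @Ediv _ _ _ _ _ _ _ HQ0 c0 Hx0 Hx1 Hc0.
have Hd0form : H^`() = c *: (('X - x0%:P) ^+ n0 * ('X - x1%:P) ^+ n1)^`().
  by rewrite -derivZ -HQ0 derivB derivC subr0.
have [Hall|] := boolP (all (pred1 b0) rs).
  rewrite (@prod1 _ _ _ Hall) szr in Hrs.
  have GdH : Gd \Po H = a *: (H - b0%:P) ^+ t.-1.
    by rewrite Hrs comp_polyZ comp_polyXn comp_polyB comp_polyX comp_polyC.
  rewrite Fd GdH HQ0 Hd0form.
  case: Hc0 => [[ex n1z]|[nx n0p n1p]].
    exfalso; subst x1 n1.
    have Hr : forall y, root ((a *: (c *: (('X - x0%:P) ^+ n0 * ('X - x0%:P) ^+ 0)) ^+ t.-1) *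
        (c *: (('X - x0%:P) ^+ n0 * ('X - x0%:P) ^+ 0)^`())) y -> y = x0.
      move=> y; rewrite expr0 mulr1 deriv_exp derivXsubC mul1r.
      rewrite rootE hornerM !hornerZ horner_exp hornerZ hornerMn !horner_exp hornerXsubC -mulr_natr.
      have n0p : (0 < n0)%N by move: Hs0; rewrite sH addn0 => ->; case: (k) hk.
      move=> E; apply/eqP; apply: contraTT E => nyx.
      have d0 : y - x0 != 0 by rewrite subr_eq0.
      by rewrite !(mulf_neq0, expf_neq0) // hc.
    case: h2 => [y1 [y2 [ny r1 r2]]].
    rewrite Fd GdH HQ0 Hd0form in r1 r2.
    by move: ny; rewrite (Hr _ r1) (Hr _ r2) eqxx.
  have ek : k = (n0 + n1)%N by move: Hs0; rewrite sH.
  left; exists n0, n1, x0, x1; split; [by split => //; rewrite ek | by [] | ].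
  rewrite dfac // -ek -/c.
  have e0 : (n0 * t - 1 = n0 * t.-1 + (n0 - 1))%N.
    by case: (t) ht => // t' _; case: (n0) n0p => // m _; rewrite /= !mulSn mulnS; lia.
  have e1 : (n1 * t - 1 = n1 * t.-1 + (n1 - 1))%N.
    by case: (t) ht => // t' _; case: (n1) n1p => // m _; rewrite /= !mulSn mulnS; lia.
  have ect : c ^+ t = c ^+ t.-1 * c by rewrite -exprSr prednK // ltnW.
  rewrite e0 e1 !exprD exprZn exprMn -!exprM ect.
  rewrite -!mul_polyC !polyCM !polyC_exp.
  set A := ('X - x0%:P) ^+ (n0 * t.-1).
  set B := ('X - x1%:P) ^+ (n1 * t.-1).
  set A' := ('X - x0%:P) ^+ (n0 - 1).
  set B' := ('X - x1%:P) ^+ (n1 - 1).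
  set M := (_%:P * 'X - _).
  set C := c%:P ^+ t.-1.
  ring.
case/allPn => b1 b1r /= nb.
have nb01 : b0 != b1 by rewrite eq_sym.
have [y0 [y1 [l0 [l1 [Hs1 HQ1 Hy0 Hy1 Hc1]]]]] := @fac _ _ _ sH1 (hS b1 (rootr b1 b1r)).
have [E1 [E1d E10 sE1 rE1]] := @Ediv _ _ _ _ _ _ _ HQ1 c0 Hy0 Hy1 Hc1.
have dis01 : forall z, root E0 z -> ~~ root E1 z.
  by move=> z /rE0 e0; apply/negP => /rE1; rewrite e0; apply/eqP.
have bd01 := @bound2 _ _ _ _ Hd0 E0d E1d E00 E10 dis01.
rewrite sHd in bd01.
have lb0 : (k <= size E0 + 1)%N.
  rewrite sE0; move: Hs0; rewrite sH /= => <-; apply: lbE.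
  by case: Hc0 => [[_ ->]|[_ p0 p1]]; [left|right].
have lb1 : (k <= size E1 + 1)%N.
  rewrite sE1; move: Hs1; rewrite sH /= => <-; apply: lbE.
  by case: Hc1 => [[_ ->]|[_ p0 p1]]; [left|right].
have k3 : k = 3%N := @k3lem _ _ _ lb0 lb1 bd01 hk.
rewrite k3 in sH sHd lb0 lb1 bd01 hk *.
have [nx01 n0p n1p] : [/\ x0 != x1, (0 < n0)%N & (0 < n1)%N].
  case: Hc0 => // [[ex n1z]]; exfalso; subst n1.
  rewrite sH addn0 /= in Hs0; subst n0.
  by apply: (@nsingle (size E0) (size E1)).
have [ny01 l0p l1p] : [/\ y0 != y1, (0 < l0)%N & (0 < l1)%N].
  case: Hc1 => // [[ex l1z]]; exfalso; subst l1.
  rewrite sH addn0 /= in Hs1; subst l0.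
  by apply: (@nsingle (size E1) (size E0)); rewrite // addnC.
have Hall2 : all (fun z => (z == b0) || (z == b1)) rs.
  apply/allP => z zr; apply/negPn/negP; rewrite negb_or => /andP [nz0 nz1].
  have [w0 [w1 [m0 [m1 [Hs2 HQ2 Hw0 Hw1 Hc2]]]]] := @fac _ _ _ sH1 (hS z (rootr z zr)).
  have [E2 [E2d E20 sE2 rE2]] := @Ediv _ _ _ _ _ _ _ HQ2 c0 Hw0 Hw1 Hc2.
  have cop01 : coprimep E0 E1 := @coprime_noroot _ _ _ E00 dis01.
  have E01d : E0 * E1 %| H^`() by rewrite Gauss_dvdp // E0d E1d.
  have dis2 : forall y, root (E0 * E1) y -> ~~ root E2 y.
    move=> y; rewrite rootM => /orP [/rE0|/rE1] ey; apply/negP => /rE2; rewrite ey => e.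
      by move: nz0; rewrite e eqxx.
    by move: nz1; rewrite e eqxx.
  have bd := @bound2 _ _ _ _ Hd0 E01d E2d (mulf_neq0 E00 E10) E20 dis2.
  rewrite sHd size_mul // in bd.
  have lb2 : (3 <= size E2 + 1)%N.
    rewrite sE2; move: Hs2; rewrite sH /= => <-; apply: lbE.
    by case: Hc2 => [[_ ->]|[_ p0 p1]]; [left|right].
  by apply: (@nthree (size E0) (size E1) (size E2)).
have [HGp HGc] := @prod2 _ _ _ _ nb01 Hall2.
set t0 := count_mem b0 rs in HGp HGc.
set t1 := count_mem b1 rs in HGp HGc.
have t0p : (0 < t0)%N by rewrite lt0n; apply/eqP => /count_memPn; rewrite b0r.
have t1p : (0 < t1)%N by rewrite lt0n; apply/eqP => /count_memPn; rewrite b1r.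
clearbody t0 t1.
rewrite HGp in Hrs.
have [u0 [v0 [nuv0 Hu0 Hv0 HR0]]] := @fac3 _ _ _ _ _ _ _ HQ0 Hx0 Hx1 (etrans Hs0 (congr1 predn sH)) nx01 n0p n1p.
have [u1 [v1 [nuv1 Hu1 Hv1 HR1]]] := @fac3 _ _ _ _ _ _ _ HQ1 Hy0 Hy1 (etrans Hs1 (congr1 predn sH)) ny01 l0p l1p.
have Hd0' : H^`() = c *: (('X - u0%:P) ^+ 1 * ('X - v0%:P) ^+ 0 *
      ((2 + 1)%:R *: 'X - (2%:R * v0 + 1%:R * u0)%:P)).
  have e := @dfac _ u0 v0 2 1 erefl erefl.
  have -> : H^`() = (H - b0%:P)^`() by rewrite derivB derivC subr0.
  by rewrite HR0 derivZ e.
have Hd1' : H^`() = c *: (('X - u1%:P) ^+ 1 * ('X - v1%:P) ^+ 0 *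
      ((2 + 1)%:R *: 'X - (2%:R * v1 + 1%:R * u1)%:P)).
  have e := @dfac _ u1 v1 2 1 erefl erefl.
  have -> : H^`() = (H - b1%:P)^`() by rewrite derivB derivC subr0.
  by rewrite HR1 derivZ e.
have dv : forall p q, H.[p] = b0 -> H.[q] = b1 -> q != p.
  move=> p q hp hq; apply/negP => /eqP e; move: nb01; by rewrite -hp -hq e eqxx.
have rel1 : 3 * u1 - u0 = 2 * v0.
  apply: (@rel3 _ c) => //; first exact: dv.
  by rewrite -evalM -Hd0' Hd1' evalM subrr !mul0r mulr0.
have rel0 : 3 * u0 - u1 = 2 * v1.
  apply: (@rel3 _ c) => //; first by rewrite eq_sym; exact: dv.
  by rewrite -evalM -Hd1' Hd0' evalM subrr !mul0r mulr0.
right; exists t0, t1, u0, v0, u1, v1; split => //.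
- by split => //; rewrite HGc szr subn1.
- rewrite /= !inE !negb_or nuv0 nuv1 /=.
  by rewrite !(eq_sym u0) !(eq_sym v0) !dv.
have ht' : t = (t0 + t1).+1 by rewrite HGc szr prednK // ltnW.
rewrite Fd Hrs comp_polyZ comp_polyM !comp_polyXn !comp_polyB comp_polyX !comp_polyC.
rewrite HR0 HR1 Hd0' (@M0e _ _ _ _ rel1) -/c.
rewrite !exprZn !exprMn -!exprM !expr1 expr0 mulr1 !exprD !expr1 ht' exprS exprD.
rewrite -!mul_polyC !polyCM !polyC_exp.
set A := ('X - u0%:P) ^+ (2 * t0).
set B := ('X - v0%:P) ^+ t0.
set C := ('X - u1%:P) ^+ (2 * t1).
set D := ('X - v1%:P) ^+ t1.
set U := ('X - u0%:P).
set V := ('X - u1%:P).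
set P := c%:P ^+ t0.
set Q := c%:P ^+ t1.
ring.
Qed.

Theorem proposition1p4 (K : fieldType) (L : closedFieldType)
  (iota : {rmorphism K -> L})
  (hchar : [pchar K] =i pred0)
  (f g h : {poly K})
  (h2crit : exists b1 b2 : L,
      [/\ b1 != b2, critical iota f b1 & critical iota f b2])
  (hnot3 : ~ exists b1 b2 b3 : L,
      [/\ [&& b1 != b2, b1 != b3 & b2 != b3],
          [&& critical iota f b1, critical iota f b2 & critical iota f b3],
          (map_poly iota f).[b1] = (map_poly iota f).[b2] &
          (map_poly iota f).[b1] = (map_poly iota f).[b3]])
  (hcomp : f = g \Po h)
  (t k : nat) (ht : t = (size g).-1) (hk : k = (size h).-1)
  (ht1 : (1 < t)%N) :
  (k <= 2)%N
  \/ (exists (a' : K) (k0 k1 : nat) (x0 x1 : L),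
        [/\ [/\ (1 <= k0)%N, (1 <= k1)%N, (k0 + k1)%N = k & (3 <= k)%N], x0 != x1 &
            map_poly iota f^`() =
              iota a' *: (('X - x0%:P) ^+ (k0 * t - 1) * ('X - x1%:P) ^+ (k1 * t - 1)
                          * (k%:R *: 'X - (k0%:R * x1 + k1%:R * x0)%:P))])
  \/ (exists (a' : K) (t0 t1 : nat) (x0 x1 y0 y1 : L),
        [/\ [/\ k = 3%N, (1 <= t0)%N, (1 <= t1)%N & (t0 + t1)%N = (t - 1)%N],
            uniq [:: x0; x1; y0; y1],
            3 * x0 - y0 = 2 * y1 /\ 3 * y0 - x0 = 2 * x1 &
            map_poly iota f^`() =
              iota a' *: (('X - x0%:P) ^+ (2 * t0 + 1) * ('X - x1%:P) ^+ t0
                          * ('X - y0%:P) ^+ (2 * t1 + 1) * ('X - y1%:P) ^+ t1)]).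
Proof.
have [k2|k3] := leqP k 2; first by left.
right.
have hK := proj1 (pcharf0P K) hchar.
have hc : forall n, (0 < n)%N -> n%:R != 0 :> L.
  by move=> n n0; rewrite -(rmorph_nat iota) fmorph_eq0 hK -lt0n.
set G := map_poly iota g.
set H := map_poly iota h.
have sG : size G = t.+1 by rewrite size_map_poly ht prednK //; move: ht1; rewrite ht; case: (size g).
have sH : size H = k.+1 by rewrite size_map_poly hk prednK //; move: k3; rewrite hk; case: (size h).
have Fe : map_poly iota f^`() = (G \Po H)^`() by rewrite -deriv_map hcomp map_comp_poly.
have Fv : map_poly iota f = G \Po H by rewrite hcomp map_comp_poly.
have h2' : exists b1 b2 : L, [/\ b1 != b2, root (G \Po H)^`() b1 & root (G \Po H)^`() b2].
  by case: h2crit => b1 [b2 [n r1 r2]]; exists b1, b2; rewrite /critical Fe in r1 r2.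
have hn3' : ~ exists b1 b2 b3 : L,
      [/\ [&& b1 != b2, b1 != b3 & b2 != b3],
          [&& root (G \Po H)^`() b1, root (G \Po H)^`() b2 & root (G \Po H)^`() b3],
          (G \Po H).[b1] = (G \Po H).[b2] &
          (G \Po H).[b1] = (G \Po H).[b3]].
  move=> [b1 [b2 [b3 [d r e1 e2]]]]; apply: hnot3; exists b1, b2, b3.
  by rewrite /critical Fe Fv.
have lcG : lead_coef G^`() = iota (lead_coef g^`()) by rewrite /G deriv_map lead_coef_map.
have lcH : lead_coef H = iota (lead_coef h) by rewrite lead_coef_map.
case: (@core L hc G H t k sG sH ht1 k3 h2' hn3') => [[k0 [k1 [x0 [x1 [c1 c2 c3]]]]]|[t0 [t1 [x0 [x1 [y0 [y1 [c1 c2 c3 c4]]]]]]]].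
  left; exists (lead_coef g^`() * lead_coef h ^+ t), k0, k1, x0, x1; split; [by case: c1 => -> -> ->; split | exact: c2 |].
  by rewrite Fe c3 lcG lcH rmorphM rmorphXn.
right; exists (3 * lead_coef g^`() * lead_coef h ^+ t), t0, t1, x0, x1, y0, y1; split; [exact: c1 | exact: c2 | exact: c3 |].
by rewrite Fe c4 lcG lcH !rmorphM rmorphXn rmorph_nat.
Qed.
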